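(* For every $n\ge 3$, the cycle $C_n$ on $n$ vertices satisfies $$\mathrm{vol}(C_n)=1-\frac{2^{n-1}}{n!}.$$
   Context: For a finite simple undirected graph $G=(V,E)$ with $V=[n]$, and $S\subseteq[n-1]$, the cut vector $x^S\in\mathbb{R}^{|E|}$ has coordinates $x^S_{ij}=1$ if $|\{i,j\}\cap S|=1$ and $x^S_{ij}=0$ otherwise, for each edge $(i,j)\in E$. The cut polytope is $\mathrm{Cut}(G)=\mathrm{conv}\{x^S: S\subseteq[n-1]\}\subset\mathbb{R}^{|E|}$, and $\mathrm{vol}(G)$ denotes the $|E|$-dimensional Lebesgue volume of $\mathrm{Cut}(G)$. *)

(* Defs.v *)
From HB Require Import structures.
From mathcomp Require Import all_boot all_order all_algebra.
From mathcomp Require Import all_classical all_reals all_analysis.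
Set Implicit Arguments. Unset Strict Implicit. Unset Printing Implicit Defensive.
Import Order.TTheory GRing.Theory Num.Theory.
Local Open Scope classical_set_scope.
Local Open Scope ring_scope.

Definition vcons (R : Type) (m : nat) (x : R) (y : 'I_m -> R) : 'I_m.+1 -> R :=
  fun i => if unlift ord0 i is Some j then y j else x.

(* m-dimensional Lebesgue volume, as the iterated Lebesgue integral of
   the indicator (Tonelli): vol_0 A = 1 if A contains the point of R^0,
   vol_{m+1} A = \int_R vol_m {y | (x,y) \in A} dx. *)
Fixpoint lebesgue_vol (R : realType) (m : nat) : set ('I_m -> R) -> \bar R :=
  match m with
  | 0 => fun A => if `[< exists f, A f >] then 1%E else 0%E
  | m'.+1 => fun A : set ('I_m'.+1 -> R) =>
      (\int[@lebesgue_measure R]_(x in [set: R])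
         @lebesgue_vol R m' [set y | A (@vcons R m' x y)])%E
  end.

(* A graph on vertex set 'I_n (i.e. [n]) with m edges, edge k having
   endpoints (ends k).1 and (ends k).2. *)
Definition cut_vector (R : nzRingType) (n m : nat) (ends : 'I_m -> 'I_n * 'I_n)
  (S : {set 'I_n}) : 'I_m -> R :=
  fun k => if ((ends k).1 \in S) (+) ((ends k).2 \in S) then 1 else 0.

(* Cut polytope: convex hull of cut vectors x^S with S a subset of [n-1],
   i.e. S not containing the last vertex (index n-1). *)
Definition cut_polytope (R : realType) (n m : nat) (ends : 'I_m -> 'I_n * 'I_n)
  : set ('I_m -> R) :=
  [set x : 'I_m -> R | exists lam : {set 'I_n} -> R,
     [/\ (forall S : {set 'I_n}, 0 <= lam S),
         (forall S : {set 'I_n}, (forall v : 'I_n, val v = n.-1 -> v \in S) -> lam S = 0),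
         \sum_(S : {set 'I_n}) lam S = 1 &
         forall k, x k = \sum_(S : {set 'I_n}) lam S * @cut_vector R n m ends S k]].

Definition cut_vol (R : realType) (n m : nat) (ends : 'I_m -> 'I_n * 'I_n) : \bar R :=
  @lebesgue_vol R m (@cut_polytope R n m ends).

Definition cycle_ends (n : nat) : 'I_n -> 'I_n * 'I_n :=
  fun k => (k, ordS k).

(* Main.v *)
Require Import Defs.
From HB Require Import structures.
From mathcomp Require Import all_boot all_order all_algebra.
From mathcomp Require Import all_classical all_reals all_analysis.
From mathcomp Require Import ring lra zify.
Set Implicit Arguments. Unset Strict Implicit. Unset Printing Implicit Defensive.
Import Order.TTheory GRing.Theory Num.Theory.
Local Open Scope ring_scope.

Section Comb.
Variable R : realType.

Definition Lf (m : nat) (v : {set 'I_m}) (y : 'I_m -> R) : R :=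
  \sum_(k < m) (if k \in v then 1 - y k else y k).

Definition vc m (b : bool) (v : {set 'I_m}) : {set 'I_m.+1} :=
  [set i | if unlift ord0 i is Some j then j \in v else b].
Definition vt m (v : {set 'I_m.+1}) : {set 'I_m} := [set j | lift ord0 j \in v].

Lemma vc_ord0 m b (v : {set 'I_m}) : (ord0 \in vc b v) = b.
Proof. by rewrite inE unlift_none. Qed.
Lemma vc_lift m b (v : {set 'I_m}) j : (lift ord0 j \in vc b v) = (j \in v).
Proof. by rewrite inE liftK. Qed.
Lemma vtK m (v : {set 'I_m.+1}) : vc (ord0 \in v) (vt v) = v.
Proof.
apply/setP => i; rewrite inE; case: unliftP => [j ->|->] //.
by rewrite inE.
Qed.
Lemma vcK m b (v : {set 'I_m}) : vt (vc b v) = v.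
Proof. by apply/setP => j; rewrite inE vc_lift. Qed.

Lemma card_sum m (A : {set 'I_m}) : #|A| = (\sum_(i < m) (i \in A))%N.
Proof.
rewrite -sum1_card big_mkcond /=; apply: eq_bigr => i _.
by case: (i \in A).
Qed.

Lemma card_vc m b (v : {set 'I_m}) : #|vc b v| = (b + #|v|)%N.
Proof.
rewrite !card_sum big_ord_recl vc_ord0; congr (_ + _)%N.
by apply: eq_bigr => j _; rewrite vc_lift.
Qed.

Lemma odd_vc m b (v : {set 'I_m}) : odd #|vc b v| = b (+) odd #|v|.
Proof. by rewrite card_vc oddD; case: b. Qed.

Lemma Lf_vc m b (v : {set 'I_m}) (y : 'I_m.+1 -> R) :
  Lf (vc b v) y = (if b then 1 - y ord0 else y ord0) + Lf v (fun j => y (lift ord0 j)).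
Proof.
rewrite /Lf big_ord_recl vc_ord0; congr (_ + _).
by apply: eq_bigr => j _; rewrite vc_lift.
Qed.

Lemma forall_vc m (P : {set 'I_m.+1} -> Prop) :
  (forall v, P v) <-> (forall b v', P (vc b v')).
Proof. by split => [H b v'|H v]; [apply: H|rewrite -(vtK v); apply: H]. Qed.

Lemma sum_vc m (F : {set 'I_m.+1} -> R) :
  \sum_(v : {set 'I_m.+1}) F v = \sum_(b : bool) \sum_(v : {set 'I_m}) F (vc b v).
Proof.
rewrite (reindex (fun p : bool * {set 'I_m} => vc p.1 p.2)) /=; last first.
  exists (fun v : {set 'I_m.+1} => (ord0 \in v, vt v)) => [[b v] _ | v _] /=.
    by rewrite vc_ord0 vcK.
  by rewrite vtK.
by rewrite pair_big.
Qed.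

Lemma vcons0 m (t : R) (z : 'I_m -> R) : vcons t z ord0 = t.
Proof. by rewrite /vcons unlift_none. Qed.
Lemma vconsS m (t : R) (z : 'I_m -> R) j : vcons t z (lift ord0 j) = z j.
Proof. by rewrite /vcons liftK. Qed.

Lemma Lf_ge0 m (v : {set 'I_m}) y : (forall k, 0 <= y k <= 1) -> 0 <= Lf v y.
Proof.
move=> hy; apply: sumr_ge0 => k _; have /andP[h0 h1] := hy k.
by case: (k \in v); rewrite ?subr_ge0.
Qed.

Lemma Lf_cross m (v w : {set 'I_m}) y : (forall k, 0 <= y k <= 1) ->
  odd #|v| -> ~~ odd #|w| -> 1 <= Lf v y + Lf w y.
Proof.
move=> hy ov ew.
have [k hk] : exists k, (k \in v) != (k \in w).
  apply/existsP; apply: contraNT ew => /existsPn hn.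
  suff -> : w = v by [].
  by apply/setP => k; have := hn k; rewrite negbK => /eqP.
rewrite /Lf -big_split /= (bigD1 k) //=.
have -> : (if k \in v then 1 - y k else y k) + (if k \in w then 1 - y k else y k) = 1.
  by move: hk; case: (k \in v); case: (k \in w) => //= _; [rewrite subrK|rewrite addrC subrK].
rewrite lerDl; apply: sumr_ge0 => i _; have /andP[h0 h1] := hy i.
by case: (i \in v); case: (i \in w); apply: addr_ge0; rewrite ?subr_ge0.
Qed.

End Comb.

Section Coupling.
Variable R : realType.

Lemma sum_par m (lam : {set 'I_m} -> R) q (h : bool -> R) :
  \sum_v lam v = 1 -> \sum_v lam v * (odd #|v|)%:R = q ->
  \sum_v lam v * h (odd #|v|) = h true * q + h false * (1 - q).
Proof.
move=> s1 sq.
have E : forall v, lam v * h (odd #|v|) =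
   h true * (lam v * (odd #|v|)%:R) + h false * (lam v - lam v * (odd #|v|)%:R).
  by move=> v; case: (odd #|v|); rewrite ?mulr1 ?mulr0 ?subr0 ?subrr ?mulr0 ?addr0 ?add0r mulrC.
rewrite (eq_bigr _ (fun v _ => E v)) big_split /= -!mulr_sumr sumrB s1 sq.
by [].
Qed.

Lemma divK' (c1 c2 w : R) : 0 <= c1 -> 0 <= c2 -> c1 + c2 = w -> c1 / w * w = c1.
Proof.
move=> h1 h2 hw; have [w0|w0] := eqVneq w 0.
  by rewrite w0 mulr0; lra.
by rewrite mulfVK.
Qed.

Lemma term_le_sum (T : finType) (g : T -> R) (v : T) :
  (forall u, 0 <= g u) -> g v <= \sum_u g u.
Proof.
move=> h; rewrite (bigD1 v) //= lerDl; exact: sumr_ge0.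
Qed.

Lemma coupling m : forall (y : 'I_m -> R) (p : R), (forall k, 0 <= y k <= 1) -> 0 <= p <= 1 ->
  (forall v : {set 'I_m}, odd #|v| -> 1 - p <= Lf v y) ->
  (forall v : {set 'I_m}, ~~ odd #|v| -> p <= Lf v y) ->
  exists lam : {set 'I_m} -> R, [/\ forall v, 0 <= lam v, \sum_v lam v = 1,
     forall k, y k = \sum_v lam v * (k \in v)%:R & \sum_v lam v * (odd #|v|)%:R = p].
Proof.
elim: m => [|m IH] y p hy hp Ho He.
  have p0 : p = 0.
    have := He (finset.set0 : {set 'I_0}); rewrite cards0 /Lf big_ord0 => /(_ isT) pl0.
    case/andP: hp => p0 _; apply/eqP; rewrite eq_le pl0 p0 //.
  exists (fun v => if v == finset.set0 then 1 else 0); split.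
  - by move=> v; case: ifP.
  - by rewrite -big_mkcond big_pred1_eq.
  - by case.
  - rewrite p0 big1 // => v _; case: eqP => [->|_]; by rewrite ?cards0 ?mulr0 ?mul0r.
set t := y ord0; pose z := fun j : 'I_m => y (lift ord0 j).
have hz : forall j : 'I_m, 0 <= z j <= 1 by move=> j; exact: hy.
have ht : 0 <= t <= 1 := hy ord0.
case/andP: ht => t0 t1; case/andP: hp => p0 p1.
have Lfy : forall b v', Lf (vc b v') y = (if b then 1 - t else t) + Lf v' z.
  by move=> b v'; rewrite Lf_vc.
have H1 : forall v' : {set 'I_m}, ~~ odd #|v'| -> t - p <= Lf v' z.
  move=> v' ev; have := Ho (vc true v'); rewrite odd_vc Lfy /= ev => /(_ isT) h; lra.
have H2 : forall v' : {set 'I_m}, odd #|v'| -> 1 - p <= t + Lf v' z.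
  move=> v' ov; have := Ho (vc false v'); rewrite odd_vc Lfy /= ov => /(_ isT) h; lra.
have H3 : forall v' : {set 'I_m}, odd #|v'| -> p <= 1 - t + Lf v' z.
  move=> v' ov; have := He (vc true v'); rewrite odd_vc Lfy /= ov => /(_ isT) h; lra.
have H4 : forall v' : {set 'I_m}, ~~ odd #|v'| -> p <= t + Lf v' z.
  move=> v' ev; have := He (vc false v'); rewrite odd_vc Lfy /= ev => /(_ isT) h; lra.
have L0 : forall v' : {set 'I_m}, 0 <= Lf v' z by move=> v'; apply: Lf_ge0.
pose lo := \big[Num.max/0]_(v : {set 'I_m} | odd #|v|) (1 - Lf v z).
pose q := Num.max (Num.max (t - p) (p - t)) lo.
have q_le : forall U, t - p <= U -> p - t <= U -> 0 <= U ->
    (forall v : {set 'I_m}, odd #|v| -> 1 - Lf v z <= U) -> q <= U.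
  move=> U a b c d; rewrite /q !ge_max a b /=; exact: bigmax_le.
have lq1 : t - p <= q by rewrite /q !le_max lexx.
have lq2 : p - t <= q by rewrite /q !le_max lexx orbT.
have lq3 : forall v : {set 'I_m}, odd #|v| -> 1 - Lf v z <= q.
  by move=> v ov; rewrite /q le_max; apply/orP; right; apply: le_bigmax_cond.
have lq0 : 0 <= q.
  rewrite /q le_max; apply/orP; right; rewrite /lo.
  elim/big_rec: _ => // i x _ hx; rewrite le_max hx orbT //.
have uq1 : q <= 1.
  apply: q_le; try lra; move=> v ov; have := L0 v; lra.
have uq2 : q <= t + p.
  apply: q_le; try lra; move=> v ov; have := H2 v ov; lra.
have uq3 : q <= 2 - t - p.
  apply: q_le; try lra; move=> v ov; have := H3 v ov; lra.
have uq4 : forall w : {set 'I_m}, ~~ odd #|w| -> q <= Lf w z.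
  move=> w ew; apply: q_le; [exact: H1|have := H4 w ew; lra|exact: L0|].
  move=> v ov; have := Lf_cross hz ov ew; lra.
have [lam' [lam'0 lam'1 lam'm lam'p]] : exists lam' : {set 'I_m} -> R, [/\ forall v, 0 <= lam' v, \sum_v lam' v = 1,
     forall k, z k = \sum_v lam' v * (k \in v)%:R & \sum_v lam' v * (odd #|v|)%:R = q].
  apply: (IH z q hz); first by rewrite lq0 uq1.
    by move=> v ov; have := lq3 v ov; lra.
  exact: uq4.
pose c (b pi : bool) : R := match b, pi with
  | true, true => (t + q - p) / 2 | true, false => (t - q + p) / 2
  | false, true => (q - t + p) / 2 | false, false => (2 - t - q - p) / 2 end.
pose w (pi : bool) : R := if pi then q else 1 - q.
have c0 : forall b pi, 0 <= c b pi.
  by case; case; rewrite /c; apply: divr_ge0; lra.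
have cw : forall pi, c true pi + c false pi = w pi.
  by case; rewrite /c /w; lra.
have cK : forall b pi, c b pi / w pi * w pi = c b pi.
  move=> b pi; case: b.
    by apply: (@divK' _ (c false pi)).
  by apply: (@divK' _ (c true pi)); rewrite // addrC.
pose lam (v : {set 'I_m.+1}) := lam' (vt v) * (c (ord0 \in v) (odd #|vt v|) / w (odd #|vt v|)).
have lamE : forall b (v' : {set 'I_m}), lam (vc b v') = lam' v' * (c b (odd #|v'|) / w (odd #|v'|)).
  by move=> b v'; rewrite /lam vcK vc_ord0.
have lamS : forall v' : {set 'I_m}, \sum_b lam (vc b v') = lam' v'.
  move=> v'; rewrite big_bool /= !lamE -mulrDr -mulrDl cw.
  have [w0|wn0] := eqVneq (w (odd #|v'|)) 0; last by rewrite mulfV // mulr1.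
  suff -> : lam' v' = 0 by rewrite mul0r.
  apply/eqP; rewrite eq_le lam'0 andbT.
  move: w0; rewrite /w; case: ifP => ov w0.
    rewrite -w0 -lam'p.
    have := @term_le_sum _ (fun u => lam' u * (odd #|u|)%:R) v'.
    by rewrite ov mulr1; apply => u; apply: mulr_ge0 => //; case: (odd _).
  have : lam' v' <= \sum_u lam' u * (~~ odd #|u|)%:R.
    have := @term_le_sum _ (fun u => lam' u * (~~ odd #|u|)%:R) v'.
    by rewrite ov mulr1; apply => u; apply: mulr_ge0 => //; case: (odd _).
  have -> : \sum_u lam' u * (~~ odd #|u|)%:R = \sum_u lam' u - \sum_u lam' u * (odd #|u|)%:R.
    rewrite -sumrB; apply: eq_bigr => u _.
    case: (odd _) => /=.
      by rewrite mulr0 mulr1 subrr.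
    by rewrite mulr0 mulr1 subr0.
  rewrite lam'1 lam'p.
  by rewrite w0.
exists lam; split.
- move=> v; apply: mulr_ge0 => //; apply: divr_ge0 => //.
  by rewrite /w; case: ifP => _; lra.
- by rewrite sum_vc exchange_big /= -lam'1; apply: eq_bigr => v' _; rewrite lamS.
- move=> k; case: (unliftP ord0 k) => [j ->|->].
    have := lam'm j; rewrite /z => ->.
    rewrite sum_vc exchange_big /=; apply: eq_bigr => v' _.
    rewrite -lamS mulr_suml; apply: eq_bigr => b _; by rewrite vc_lift.
  rewrite sum_vc big_bool /=.
  under eq_bigr do rewrite vc_ord0 mulr1.
  under [X in _ + X]eq_bigr do rewrite vc_ord0 mulr0.
  rewrite big1_eq addr0.
  under eq_bigr do rewrite lamE.
  rewrite (sum_par (fun pi => c true pi / w pi) lam'1 lam'p) /=.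
  have := cK true true; have := cK true false; rewrite /w /= => -> ->.
  rewrite /c /t; lra.
- rewrite sum_vc big_bool /=.
  under eq_bigr do rewrite odd_vc lamE -mulrA.
  under [X in _ + X]eq_bigr do rewrite odd_vc lamE -mulrA.
  rewrite (sum_par (fun pi => c true pi / w pi * (true (+) pi)%:R) lam'1 lam'p) /=.
  rewrite (sum_par (fun pi => c false pi / w pi * (false (+) pi)%:R) lam'1 lam'p) /=.
  rewrite !mulr0 !mul0r !mulr1 !add0r addr0.
  have := cK false true; have := cK true false; rewrite /w /= => -> ->.
  rewrite /c; lra.
Qed.

End Coupling.

Section Cycle.
Variable R : realType.

Definition Q (m : nat) (r s : R) : set ('I_m -> R) :=
  [set y | (forall k, 0 <= y k <= 1) /\
           (forall v : {set 'I_m}, odd #|v| -> r <= Lf v y) /\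
           (forall v : {set 'I_m}, ~~ odd #|v| -> s <= Lf v y)].

Definition cs n (S : {set 'I_n}) : {set 'I_n} := [set k | (k \in S) (+) (ordS k \in S)].

Lemma cut_vectorE n (S : {set 'I_n}) k :
  @cut_vector R n n (@cycle_ends n) S k = (k \in cs S)%:R.
Proof. by rewrite /cut_vector /cycle_ends /= inE; case: (_ (+) _). Qed.

Lemma cs_even n (S : {set 'I_n}) : ~~ odd #|cs S|.
Proof.
have R1 : (\sum_(k < n) (k \in S) = \sum_(k < n) (ordS k \in S))%N.
  by rewrite [LHS](reindex_inj (@ordS_inj n)).
have E : (#|cs S| + (\sum_(k < n) ((k \in S) && (ordS k \in S))).*2 =
          \sum_(k < n) (k \in S) + \sum_(k < n) (ordS k \in S))%N.
  rewrite card_sum -addnn -!big_split /=; apply: eq_bigr => k _.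
  by rewrite inE; case: (k \in S); case: (ordS k \in S).
have := congr1 odd E; rewrite oddD odd_double addbF -R1 addnn odd_double => ->.
by [].
Qed.

Lemma Lf_ind m (v : {set 'I_m}) : Lf v (fun k => (k \in v)%:R : R) = 0.
Proof. by apply: big1 => k _; case: (k \in v); rewrite ?subrr. Qed.

Lemma cut_sub_Q n (x : 'I_n -> R) :
  @cut_polytope R n n (@cycle_ends n) x -> @Q n 1 0 x.
Proof.
case=> lam [l0 _ l1 lx].
have xE : forall k, x k = \sum_S lam S * (k \in cs S)%:R.
  by move=> k; rewrite lx; apply: eq_bigr => S _; rewrite cut_vectorE.
have hx : forall k, 0 <= x k <= 1.
  move=> k; rewrite xE; apply/andP; split.
    by apply: sumr_ge0 => S _; apply: mulr_ge0.
  rewrite -[X in _ <= X]l1; apply: ler_sum => S _; case: (_ \in _); rewrite ?mulr1 ?mulr0 //.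
split => //; split; last by move=> v _; apply: Lf_ge0.
move=> v ov.
have LE : Lf v x = \sum_S lam S * Lf v (fun k => (k \in cs S)%:R).
  rewrite /Lf; under [RHS]eq_bigr do rewrite mulr_sumr.
  rewrite exchange_big /=; apply: eq_bigr => k _.
  case: (k \in v); last by rewrite xE.
  rewrite xE -{1}l1 -sumrB; apply: eq_bigr => S _; by rewrite mulrBr mulr1.
rewrite LE -{1}l1; apply: ler_sum => S _; rewrite -{1}(mulr1 (lam S)).
apply: ler_wpM2l => //.
have hy : forall k, 0 <= ((k \in cs S)%:R : R) <= 1 by move=> k; case: (_ \in _); rewrite /= ?ler01 ?lexx.
have := Lf_cross hy ov (cs_even S); rewrite Lf_ind addr0 //.
Qed.

End Cycle.

Section Hard.
Variable R : realType.

Definition cnt n (T : {set 'I_n}) (j : nat) : nat :=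
  \sum_(i < n | (j <= i)%N && (i < n.-1)%N) (i \in T).
Definition sv n (T : {set 'I_n}) : {set 'I_n} := [set j : 'I_n | odd (cnt T j)].

Lemma cnt_step n (T : {set 'I_n}) (k : 'I_n) : (k < n.-1)%N -> cnt T k = ((k \in T) + cnt T k.+1)%N.
Proof.
move=> hk; rewrite /cnt (bigD1 k) /=; last by rewrite leqnn hk.
congr (_ + _)%N; apply: eq_bigl => i.
rewrite -val_eqE /=.
have := ltn_ord i; lia.
Qed.

Lemma cnt_last n (T : {set 'I_n}) (k : 'I_n) : val k = n.-1 -> cnt T k = 0%N.
Proof.
move=> hk; rewrite /cnt big_pred0 // => i; rewrite hk ltnNge andbN //.
Qed.

Lemma cnt0 n (T : {set 'I_n}) (k0 : 'I_n) : val k0 = n.-1 -> odd #|T| = odd (cnt T 0) (+) (k0 \in T).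
Proof.
move=> hk; rewrite card_sum (bigD1 k0) //=.
have -> : (\sum_(i < n | i != k0) (i \in T))%N = cnt T 0.
  rewrite /cnt; apply: eq_bigl => i /=.
  rewrite -val_eqE /= hk; have := ltn_ord i; lia.
by rewrite oddD addbC; case: (k0 \in T).
Qed.

Lemma cs_sv n (T : {set 'I_n}) : ~~ odd #|T| -> cs (sv T) = T.
Proof.
move=> ev; apply/setP => k; rewrite !inE.
have n0 : (0 < n)%N by apply: leq_ltn_trans (ltn_ord k).
have [hk|hk] := ltnP k n.-1.
  have -> : nat_of_ord (ordS k) = k.+1 by rewrite /= modn_small // -ltn_predRL.
  by rewrite cnt_step // oddD addbK; case: (k \in T).
have kE : nat_of_ord k = n.-1 by have := ltn_ord k; lia.
have -> : nat_of_ord (ordS k) = 0%N.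
  by rewrite /= kE prednK // modnn.
rewrite cnt_last //=.
by move: (cnt0 T kE); rewrite (negbTE ev); case: (odd _); case: (k \in T).
Qed.

Lemma Q_sub_cut n (x : 'I_n -> R) : (0 < n)%N ->
  @Q R n 1 0 x -> @cut_polytope R n n (@cycle_ends n) x.
Proof.
move=> n0 [hx [Ho He]].
have hp : 0 <= (0 : R) <= 1 by rewrite lexx ler01.
have HoA : forall v : {set 'I_n}, odd #|v| -> 1 - 0 <= Lf v x.
  by move=> v ov; rewrite subr0; apply: Ho.
have HeA : forall v : {set 'I_n}, ~~ odd #|v| -> 0 <= Lf v x.
  by move=> v _; apply: Lf_ge0.
have [lam [l0 l1 lm lp]] := @coupling R n x 0 hx hp HoA HeA.
have lodd : forall T : {set 'I_n}, odd #|T| -> lam T = 0.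
  move=> T oT; have := (psumr_eq0P (fun T _ => mulr_ge0 (l0 T) (ler0n _ (odd #|T|)))) lp T isT.
  by rewrite oT mulr1.
have k0lt : (n.-1 < n)%N by rewrite ltn_predL.
pose k0 : 'I_n := Ordinal k0lt.
exists (fun S => \sum_(T | sv T == S) lam T); split.
- by move=> S; apply: sumr_ge0.
- move=> S hS; apply: big1 => T /eqP hT; exfalso.
  have := hS k0 erefl; rewrite -hT inE (@cnt_last n T k0 erefl).
  by move=> h; discriminate h.
- by rewrite -l1 [RHS](partition_big (@sv n) predT).
- move=> k; rewrite lm.
  under [RHS]eq_bigr do rewrite mulr_suml.
  rewrite [LHS](partition_big (@sv n) predT) //=; apply: eq_bigr => S _.
  apply: eq_bigr => T /eqP <-.
  case oT: (odd #|T|); first by rewrite lodd // !mul0r.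
  by rewrite cut_vectorE cs_sv // oT.
Qed.

End Hard.

Import numFieldNormedType.Exports.
Local Open Scope classical_set_scope.
Local Open Scope ring_scope.
Section Calc.
Variable R : realType.
Definition P (u : R) : R := Num.max u 0.

Lemma P_cont : continuous P.
Proof.
rewrite /P; have -> : (fun u : R => Num.max u 0) = (id \max cst 0) by [].
by move=> x; apply: continuous_max => //; apply: cvg_cst.
Qed.

Lemma PP (u : R) : P u * P u = u * P u.
Proof. by rewrite /P; case: (leP u 0) => h; rewrite ?mulr0. Qed.


Lemma Pk_derive k (u : R) :
  is_derive u (1:R) (fun y => P y ^+ k.+2) (k.+2%:R * P u ^+ k.+1).
Proof.
have [u0|u0|->] := ltrgtP u 0.
- have -> : k.+2%:R * P u ^+ k.+1 = 0 by rewrite /P max_r ?ltW // exprS mul0r mulr0.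
  apply: near_eq_is_derive (is_derive_cst (0:R) u 1).
  near=> y; rewrite /cst /P max_r ?exprS ?mul0r //; apply: ltW.
  near: y; exact: lt_nbhsl.
- have E : P u = u by rewrite /P max_l ?ltW.
  rewrite E; apply: near_eq_is_derive (@is_derive_eq _ _ _ _ _ _ _ _
     (@is_deriveX _ _ id k.+2 u 1 1 (is_derive_id u 1)) _).
    near=> y; rewrite /P max_l ?exprfctE //; apply: ltW.
    near: y; exact: lt_nbhsr.
  exact: mulr1.
- have P0 : P 0 = 0 by rewrite /P maxxx.
  rewrite P0 exprS mul0r mulr0.
  have L : (fun h : R => h^-1 *: (((fun y => P y ^+ k.+2) \o shift 0) (h *: 1) - P 0 ^+ k.+2)) @ 0^' --> (0:R).
    apply: (@cvg_trans _ ((fun h => P h ^+ k.+1) @ 0^')).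
      apply: near_eq_cvg; near=> h.
      have hn0 : h != 0 by near: h; exact: nbhs_dnbhs_neq.
      have E1 : h%:A = h := mulr1 h.
      have E2 : forall X : R, h^-1 *: X = h^-1 * X by [].
      rewrite /= E1 E2 addr0 P0 expr0n /= subr0.
      by rewrite !exprS mulrA PP -mulrA -exprS mulKf.
    apply: cvg_within_filter.
    have C0 : {for (0:R), continuous (fun h => P h ^+ k.+1)}.
      by apply: (@continuous_comp _ _ _ P (fun x => x ^+ k.+1)); [exact: P_cont|exact: exprn_continuous].
    have C : (fun h => P h ^+ k.+1) @ (0:R) --> P 0 ^+ k.+1 := C0.
    by rewrite P0 exprS mul0r in C.
  apply: DeriveDef; first exact: cvgP L.
  by apply: cvg_lim L; exact: Rhausdorff.
Unshelve. all: by end_near.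
Qed.


Lemma aff_derive (a e x : R) : is_derive x (1:R) (fun y => a + e * y) e.
Proof.
have E : (fun y => a + e * y) = cst a + e \*: (@id R) by apply/funext => y.
rewrite E.
have H : is_derive x (1:R) (cst a + e \*: (@id R)) (0 + e *: 1).
  by apply: is_deriveD.
apply: (is_derive_eq H).
by rewrite add0r; exact: mulr1.
Qed.

Lemma Paff_derive k (a e x : R) :
  is_derive x (1:R) (fun y => P (a + e * y) ^+ k.+2) (k.+2%:R * P (a + e * x) ^+ k.+1 * e).
Proof.
exact: (@is_derive1_comp R (fun y => P y ^+ k.+2) (fun y => a + e * y) x _ _
   (Pk_derive k (a + e * x)) (aff_derive a e x)).
Qed.

Lemma Paff_cont k (a e : R) : continuous (fun y => P (a + e * y) ^+ k).
Proof.
move=> x.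
apply: (@continuous_comp _ _ _ (fun y => a + e * y) (fun u => P u ^+ k)).
  apply: differentiable_continuous; apply/derivable1_diffP.
  by have [] := aff_derive a e x.
apply: (@continuous_comp _ _ _ P (fun u => u ^+ k)); [exact: P_cont|exact: exprn_continuous].
Qed.

End Calc.

Import numFieldNormedType.Exports.
Local Open Scope classical_set_scope.
Local Open Scope ring_scope.
Section Vol.
Variable R : realType.

Lemma Lf_vcons m b (v : {set 'I_m}) (t : R) (z : 'I_m -> R) :
  Lf (vc b v) (vcons t z) = (if b then 1 - t else t) + Lf v z.
Proof.
rewrite Lf_vc vcons0; congr (_ + _); rewrite /Lf.
by apply: eq_bigr => j _; rewrite vconsS.
Qed.

Lemma Q_vcons m (r s t : R) (z : 'I_m -> R) :
  @Q R m.+1 r s (vcons t z) <->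
  (0 <= t <= 1 /\ @Q R m (Num.max (r - t) (s - 1 + t)) (Num.max (s - t) (r - 1 + t)) z).
Proof.
split.
- case=> hc [ho he]; have ht := hc ord0; rewrite vcons0 in ht; split => //.
  split; first by move=> j; have := hc (lift ord0 j); rewrite vconsS.
  split.
  + move=> v ov; rewrite ge_max; apply/andP; split.
    * have := ho (vc false v); rewrite odd_vc Lf_vcons /= => /(_ ov) h; lra.
    * have := he (vc true v); rewrite odd_vc Lf_vcons /= negbK => /(_ ov) h; lra.
  + move=> v ev; rewrite ge_max; apply/andP; split.
    * have := he (vc false v); rewrite odd_vc Lf_vcons /= => /(_ ev) h; lra.
    * have := ho (vc true v); rewrite odd_vc Lf_vcons /= => /(_ ev) h; lra.
- case=> /andP[t0 t1] [hc [ho he]]; split.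
    move=> k; case: (unliftP ord0 k) => [j ->|->]; first by rewrite vconsS; exact: hc.
    by rewrite vcons0 t0 t1.
  split.
  + move=> v; rewrite -(vtK v) odd_vc Lf_vcons; case: (ord0 \in v) => /= h.
      by have := he _ h; rewrite ge_max => /andP[_ h2]; lra.
    by have := ho _ h; rewrite ge_max => /andP[h1 _]; lra.
  + move=> v; rewrite -(vtK v) odd_vc Lf_vcons; case: (ord0 \in v) => /= h.
      by rewrite negbK in h; have := ho _ h; rewrite ge_max => /andP[_ h2]; lra.
    by have := he _ h; rewrite ge_max => /andP[h1 _]; lra.
Qed.

Lemma vol_set0 m (A : set ('I_m -> R)) : (forall y, ~ A y) -> lebesgue_vol A = 0%E.
Proof.
elim: m A => [|m IH] A hA /=.
  by rewrite asboolF // => -[f /hA].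
under eq_integral => x _ do rewrite (IH _ (fun y => hA _)).
exact: integral0.
Qed.

Lemma Q0E (r s : R) (f : 'I_0 -> R) : @Q R 0 r s f <-> s <= 0.
Proof.
have E : forall v : {set 'I_0}, v = finset.set0 by move=> v; apply/setP => -[].
split.
  case=> _ [_ he]; have := he finset.set0; rewrite cards0 /Lf big_ord0.
  by apply.
move=> hs; split; first by case.
split => v; rewrite (E v) cards0 //.
by rewrite /Lf big_ord0.
Qed.

Lemma P0le (u : R) : u <= 0 -> P u = 0.
Proof. by move=> h; rewrite /P max_r. Qed.
Lemma Pge (u : R) : 0 <= u -> P u = u.
Proof. by move=> h; rewrite /P max_l. Qed.
Lemma P_ge0 (u : R) : 0 <= P u.
Proof. by rewrite /P le_max lexx orbT. Qed.

Lemma Pmax n (a b : R) : a + b <= 0 ->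
  P (Num.max a b) ^+ n.+1 = P a ^+ n.+1 + P b ^+ n.+1.
Proof.
move=> ab.
have [a0|a0] := leP a 0; have [b0|b0] := leP b 0.
- by rewrite !P0le ?ge_max ?a0 ?b0 // expr0n addr0.
- rewrite max_r; last by lra.
  by rewrite (P0le a0) expr0n add0r.
- rewrite max_l; last by lra.
  by rewrite (P0le b0) expr0n addr0.
- lra.
Qed.

End Vol.

Import numFieldNormedType.Exports.
Local Open Scope classical_set_scope.
Local Open Scope ring_scope.
Section Vol1.
Variable R : realType.

Lemma vol1 (r s : R) : r <= 1 -> s <= 1 -> r + s <= 1 ->
  lebesgue_vol (@Q R 1 r s) = (1 - (P r + P s))%:E.
Proof.
move=> r1 s1 rs1 /=.
pose a := Num.max s 0; pose b := Num.min (1 - r) 1.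
have ab : a <= b by rewrite /a /b ge_max !le_min; apply/andP; split; apply/andP; split; lra.
have memE : forall x : R, (exists f, @Q R 1 r s (vcons x f)) <-> (a <= x <= b).
  move=> x; split.
    case=> f /Q_vcons [/andP[x0 x1] /Q0E]; rewrite ge_max => /andP[h1 h2].
    rewrite /a /b ge_max le_min; apply/andP; split; apply/andP; split; lra.
  rewrite /a /b ge_max le_min => /andP[/andP[h1 h2] /andP[h3 h4]].
  exists (fun _ => 0); apply/Q_vcons; split; first by apply/andP; split; lra.
  by apply/Q0E; rewrite ge_max; apply/andP; split; lra.
transitivity (\int[lebesgue_measure]_(x in [set: R]) (\1_([set` `[a, b]]) x)%:E)%E.
  apply: eq_integral => x _.
  rewrite /indic; case: (pselect (exists f, @Q R 1 r s (vcons x f))) => h.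
    rewrite asboolT // mem_set //=; exact/memE.
  rewrite asboolF // memNset //= in_itv /=; by move/memE.
rewrite integral_indic //= setIT lebesgue_measure_itv /=.
have E : b - a = 1 - (P r + P s).
  rewrite /a /b /P; have [hr|hr] := leP r 0; have [hs|hs] := leP s 0;
    have [h3|h3] := leP (1 - r) 1; lra.
case: ifPn => hab; first by rewrite -EFinB E.
have eab : a = b by apply/eqP; rewrite eq_le ab /= leNgt.
by rewrite -E eab subrr.
Qed.

End Vol1.

Import numFieldNormedType.Exports.
Local Open Scope classical_set_scope.
Local Open Scope ring_scope.
Section Step.
Variable R : realType.

Definition F (k : nat) (r s : R) : R := 1 - 2 ^+ k.-1 / (k`!)%:R * (P r ^+ k + P s ^+ k).

Lemma volS m (A : set ('I_m.+1 -> R)) : lebesgue_vol A =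
  (\int[lebesgue_measure]_(x in [set: R]) lebesgue_vol [set y | A (vcons x y)])%E.
Proof. by []. Qed.

Lemma vol_step k :
  (forall r s : R, r <= 1 -> s <= 1 -> r + s <= 1 -> lebesgue_vol (@Q R k.+1 r s) = (F k.+1 r s)%:E) ->
  forall r s : R, r <= 1 -> s <= 1 -> r + s <= 1 -> lebesgue_vol (@Q R k.+2 r s) = (F k.+2 r s)%:E.
Proof.
move=> IH r s r1 s1 rs1.
pose c : R := 2 ^+ k / (k.+1)`!%:R.
pose h1 := fun y : R => P (r + -1 * y) ^+ k.+1.
pose h2 := fun y : R => P (s - 1 + 1 * y) ^+ k.+1.
pose h3 := fun y : R => P (s + -1 * y) ^+ k.+1.
pose h4 := fun y : R => P (r - 1 + 1 * y) ^+ k.+1.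
pose g := cst 1 - c \*: (h1 + h2 + h3 + h4).
have gE : forall x, g x = 1 - c * (h1 x + h2 x + h3 x + h4 x) by [].
have step1 : lebesgue_vol (@Q R k.+2 r s) = (\int[lebesgue_measure]_(x in `[0%R, 1%R]) (g x)%:E)%E.
  rewrite volS [RHS]integral_mkcond; apply: eq_integral => x _; rewrite patchE.
  case: ifPn => hx.
    have hx' : 0 <= x <= 1 by move: hx; rewrite inE /= in_itv.
    have -> : [set y | @Q R k.+2 r s (vcons x y)] =
        @Q R k.+1 (Num.max (r - x) (s - 1 + x)) (Num.max (s - x) (r - 1 + x)).
      by apply/seteqP; split => y /=; [case/Q_vcons | move=> h; apply/Q_vcons].
    case/andP: hx' => x0 x1.
    rewrite IH; first last.
    - by have [h5|h5] := leP (r - x) (s - 1 + x); have [h6|h6] := leP (s - x) (r - 1 + x); lra.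
    - by rewrite ge_max; apply/andP; split; lra.
    - by rewrite ge_max; apply/andP; split; lra.
    congr EFin; rewrite /F gE /h1 /h2 /h3 /h4 !Pmax; try lra.
    by rewrite !mulN1r !mul1r /c /= !addrA.
  rewrite vol_set0 // => y /Q_vcons [hx' _]; apply: (negP hx).
  by rewrite inE /= in_itv.
pose f1 := fun y : R => P (r + -1 * y) ^+ k.+2.
pose f2 := fun y : R => P (s - 1 + 1 * y) ^+ k.+2.
pose f3 := fun y : R => P (s + -1 * y) ^+ k.+2.
pose f4 := fun y : R => P (r - 1 + 1 * y) ^+ k.+2.
pose G := (@id R) - (c / k.+2%:R) \*: (- f1 + f2 - f3 + f4).
have GE : forall x, G x = x - c / k.+2%:R * (- f1 x + f2 x - f3 x + f4 x) by [].
have GD : forall x, is_derive x (1:R) G (g x).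
  move=> x.
  have D1 := Paff_derive k r (-1) x.
  have D2 := Paff_derive k (s - 1) 1 x.
  have D3 := Paff_derive k s (-1) x.
  have D4 := Paff_derive k (r - 1) 1 x.
  have H := is_deriveB (is_derive_id x 1) (is_deriveZ (c / k.+2%:R)
     (is_deriveD (is_deriveB (is_deriveD (is_deriveN D1) D2) D3) D4)).
  apply: (is_derive_eq H).
  have SE : forall a b : R, a *: b = a * b by [].
  rewrite SE gE /h1 /h2 /h3 /h4 /c.
  field.
  by rewrite pnatr_eq0 -lt0n fact_gt0 /= -natrD pnatr_eq0.
have Gc : continuous G.
  move=> x; have [dG _] := GD x.
  exact/differentiable_continuous/derivable1_diffP.
rewrite step1 (@continuous_FTC2 R g G 0 1) //.
- rewrite -EFinB; congr EFin; rewrite !GE /f1 /f2 /f3 /f4 /F /c.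
  rewrite !mulN1r !mul1r oppr0 !addr0 !subrK.
  rewrite (P0le (_ : r - 1 <= 0)); last by lra.
  rewrite (P0le (_ : s - 1 <= 0)); last by lra.
  rewrite expr0n /= oppr0 ?addr0 ?add0r.
  rewrite (factS k.+1) natrM (exprS 2 k).
  set X := (k.+1)`!%:R; set A := P r ^+ k.+2; set B := P s ^+ k.+2.
  field.
  by rewrite pnatr_eq0 -lt0n fact_gt0 /= -natrD pnatr_eq0.
- apply: continuous_subspaceT => x; rewrite /g.
  apply: continuousB; first exact: cvg_cst.
  apply: continuousZl_tmp.
  by repeat apply: continuousD; apply: Paff_cont.
- split.
  + by move=> x _; have [] := GD x.
  + by apply: cvg_within_filter; exact: Gc.
  + by apply: cvg_within_filter; exact: Gc.
- by move=> x _; rewrite derive1E; have [_ ->] := GD x.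
Qed.

End Step.

Import numFieldNormedType.Exports.
Local Open Scope classical_set_scope.
Local Open Scope ring_scope.

Lemma vol_Q (R : realType) k : forall r s : R, r <= 1 -> s <= 1 -> r + s <= 1 ->
  lebesgue_vol (@Q R k.+1 r s) = (F k.+1 r s)%:E.
Proof.
elim: k => [|k IH].
  move=> r s r1 s1 rs1.
  by rewrite vol1 // /F /= expr0 !expr1 (_ : 1`! = 1%N) // divr1 mul1r.
move=> r s r1 s1 rs1; exact: (vol_step IH r1 s1 rs1).
Qed.

Unset Implicit Arguments.
Theorem proposition5 (R : realType) (n : nat) (hn : (3 <= n)%N) :
  @cut_vol R n n (@cycle_ends n) = (1 - 2 ^+ n.-1 / (n`!)%:R : R)%:E.
Proof.
have n0 : (0 < n)%N by apply: leq_trans hn.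
have -> : @cut_vol R n n (@cycle_ends n) = lebesgue_vol (@Q R n 1 0).
  rewrite /cut_vol; congr lebesgue_vol; apply/seteqP; split => x.
    exact: cut_sub_Q.
  exact: Q_sub_cut.
case: n hn n0 => [//|k] _ _.
have h1 : (1:R) <= 1 := lexx _.
have h2 : (0:R) <= 1 := ler01.
have h3 : (1:R) + 0 <= 1 by rewrite addr0.
rewrite (@vol_Q R k 1 0 h1 h2 h3).
rewrite /F Pge ?ler01 // P0le // expr1n expr0n /=.
by rewrite addr0 mulr1.
Qed.
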